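(* Let $b(x)=\frac14x^4+\frac12px^2+qx$ with $p<0$, $q\in\mathbb{R}$, and $N(\eta,\tau)=\int_{-\infty}^{\infty}e^{2\tau[\eta\lambda-b(\lambda)]}\,d\lambda$. Define, for $(x,y,t),(r,s,u)\in\mathbb{R}^3$, $$\mathcal{S}[(x,y,t),(r,s,u)]=c\int_0^\infty\!\!\int_{-\infty}^\infty\tau\, e^{\tau[i(t-u)+i\eta(y-s)-(b(x)+b(r)-\eta(x+r))]}[N(\eta,\tau)]^{-1}\,d\eta\,d\tau,$$ and for $z,w\in\mathbb{C}^2$ $$S(z,w)=c\iint_{\tau>0}\tau\, e^{\eta\tau[z_1+\bar w_1]+i\tau[z_2-\bar w_2]}[N(\eta,\tau)]^{-1}\,d\eta\,d\tau,$$ with $c>0$ an absolute constant. Suppose $x,r\in\mathbb{R}$ satisfy either ($x=r$ and $|x|>\sqrt{-p}$) or $|x|=|r|=\sqrt{-p}$. Then $\mathcal{S}[(x,0,0),(r,0,0)]=+\infty$ (the integral, whose integrand is non-negative, diverges). Also, for $h,k\in\mathbb{R}$ with $\delta=h+k>0$, $$\lim_{\delta\to0^+}S[(x,\,i(b(x)+h)),(r,\,i(b(r)+k))]=\infty.$$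
   Context: Here $(x,i(b(x)+h))$ denotes the point $(z_1,z_2)=(x+i0,\,0+i(b(x)+h))\in\mathbb{C}^2$. The function $S$ is the Szeg\''o kernel of $\Omega=\{(z_1,z_2):\operatorname{Im}z_2>b(\operatorname{Re}z_1)\}$ and $\mathcal{S}$ is its expression on $\partial\Omega\cong\mathbb{R}^3$. *)

(* Defs.v *)
From HB Require Import structures.
From mathcomp Require Import all_boot all_order all_algebra.
From mathcomp Require Import all_classical all_reals all_analysis.
From mathcomp Require Import complex.
Set Implicit Arguments. Unset Strict Implicit. Unset Printing Implicit Defensive.
Import Order.TTheory GRing.Theory Num.Theory.
Local Open Scope classical_set_scope.
Local Open Scope ring_scope.

Section Defs.
Variable R : realType.

Definition bfun (p q x : R) : R := x ^+ 4 / 4 + p * x ^+ 2 / 2 + q * x.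

Definition Nfun (p q eta tau : R) : \bar R :=
  (\int[@lebesgue_measure R]_(l in [set: R])
     (expR (2 * tau * (eta * l - bfun p q l)))%:E)%E.

Definition cexp (z : R[i]) : R[i] :=
  Complex (expR (complex.Re z) * cos (complex.Im z)) (expR (complex.Re z) * sin (complex.Im z)).

Definition Sbdry_integrand (c p q : R) (x y t r s u : R) (tau eta : R) : R[i] :=
  (cexp (Complex (- (tau * (bfun p q x + bfun p q r - eta * (x + r))))
                 (tau * ((t - u) + eta * (y - s))))
   * ((c * tau / fine (Nfun p q eta tau)) : R)%:C)%C.

Definition S_integrand (c p q : R) (z1 z2 w1 w2 : R[i]) (tau eta : R) : R[i] :=
  (cexp ((eta * tau)%:C * (z1 + w1^*) + 'i * tau%:C * (z2 - w2^*))
   * ((c * tau / fine (Nfun p q eta tau)) : R)%:C)%C.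

(* Value of a kernel whose integrand F is real and nonnegative on tau > 0:
   the iterated Lebesgue integral \int_0^oo \int_R F d eta d tau in \bar R. *)
Definition kernel_value (F : R -> R -> R[i]) : \bar R :=
  (\int[@lebesgue_measure R]_(tau in `]0%R, +oo[)
     \int[@lebesgue_measure R]_(eta in [set: R]) (complex.Re (F tau eta))%:E)%E.

Definition bpt1 (x : R) : R[i] := Complex x 0.
Definition bpt2 (p q x h : R) : R[i] := Complex 0 (bfun p q x + h).

End Defs.

(* Main.v *)
Require Import Defs.
From HB Require Import structures.
From mathcomp Require Import all_boot all_order all_algebra.
From mathcomp Require Import all_classical all_reals all_analysis.
From mathcomp Require Import complex.
From mathcomp Require Import ring lra measurable_realfun.
Import Order.TTheory GRing.Theory Num.Theory.
Local Open Scope classical_set_scope.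
Local Open Scope ring_scope.
Lemma le_integral_nm (R : realType) (D : set R) (f g : R -> \bar R) :
  (forall x, D x -> (0 <= f x)%E) -> (forall x, D x -> (f x <= g x)%E) ->
  (\int[@lebesgue_measure R]_(x in D) f x <= \int[@lebesgue_measure R]_(x in D) g x)%E.
Proof.
move=> f0 fg.
have g0 : forall x, D x -> (0 <= g x)%E by move=> x Dx; exact: le_trans (f0 x Dx) (fg x Dx).
rewrite !ge0_integralE//.
apply: ge_ereal_sup => _ [h /= hf <-].
apply: ereal_sup_ubound; exists h => //= x.
apply: le_trans (hf x) _.
rewrite /patch; case: ifPn => // /[!inE] Dx; exact: fg.
Qed.

Lemma N_ge0 (R : realType) (p q eta tau : R) : (0 <= Nfun p q eta tau)%E.
Proof. by apply: integral_ge0 => l _; rewrite lee_fin expR_ge0. Qed.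

Lemma N_upper (R : realType) (p q eta tau E k m a : R) : 0 < a ->
  (forall l, 2 * tau * (eta * l - bfun p q l) <= E + k - a * (l - m) ^+ 2) ->
  (Nfun p q eta tau <= (expR (E + k) / normal_peak (Num.sqrt (a^-1 / 2)))%:E)%E.
Proof.
move=> a0 Hl.
set s := Num.sqrt (a^-1 / 2).
have s2 : s ^+ 2 *+ 2 = a^-1.
  rewrite /s sqr_sqrtr; last by rewrite divr_ge0 // invr_ge0 ltW.
  by rewrite -mulr_natr mulfVK // pnatr_eq0.
have s0 : s != 0.
  by apply/eqP => s0; move: s2; rewrite s0 expr0n /= mul0rn => /esym/eqP; rewrite invr_eq0 gt_eqF.
have pk0 : 0 < normal_peak s by exact: normal_peak_gt0.
apply: (@le_trans _ _ (\int[@lebesgue_measure R]_(l in [set: R])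
   ((expR (E + k) / normal_peak s)%:E * (normal_pdf m s l)%:E))%E).
  apply: le_integral_nm => l _; first by rewrite lee_fin expR_ge0.
  rewrite -EFinM lee_fin /normal_pdf (negbTE s0) /normal_fun.
  rewrite mulrA divfK ?gt_eqF // -expRD ler_expR.
  rewrite s2 invrK; move: (Hl l); rewrite mulNr -mulNr; lra.
rewrite ge0_integralZl_EFin //.
- by rewrite integral_normal_pdf mule1.
- by move=> l _; rewrite lee_fin normal_pdf_ge0.
- by apply/measurable_EFinP; exact: measurable_normal_pdf.
- by rewrite divr_ge0 ?expR_ge0 ?ltW.
Qed.
Lemma integral_cst_indic (R : realType) (K a b : R) : 0 <= K -> a <= b ->
  (\int[@lebesgue_measure R]_(l in [set: R]) (K * \1_(`[a, b]%classic : set R) l)%:E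
    = (K * (b - a))%:E)%E.
Proof.
move=> K0 ab.
under eq_integral do rewrite EFinM.
rewrite ge0_integralZl_EFin //.
- rewrite integral_indic // setIT.
  transitivity (K%:E * (@lebesgue_measure R ([set` `[a, b]] : set R)))%E; first by [].
  rewrite lebesgue_measure_itv /=.
  case: ifPn => [_|]; first by rewrite -EFinD -EFinM.
  rewrite lte_fin -leNgt => ba.
  have -> : b = a by apply/eqP; rewrite eq_le ab ba.
  by rewrite subrr mulr0 mule0.
- apply/measurable_EFinP; exact: measurable_indic.
Qed.

Lemma N_gt0 (R : realType) (p q eta tau : R) : 0 <= tau -> (0 < Nfun p q eta tau)%E.
Proof.
move=> t0.
set Z := 2 * tau * (`|eta| + 1 + `|p| + `|q|).
apply: (@lt_le_trans _ _ (expR (- Z))%:E); first by rewrite lte_fin expR_gt0.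
have -> : expR (- Z) = expR (- Z) * (1 - 0) by rewrite subr0 mulr1.
rewrite -integral_cst_indic ?expR_ge0 ?ler01 //.
apply: le_integral_nm => l _; first by rewrite lee_fin mulr_ge0 ?expR_ge0 ?indic_ge0.
rewrite lee_fin indicE; case: (boolP (l \in _)) => [|_]; last by rewrite mulr0 expR_ge0.
rewrite inE /= in_itv /= => /andP[l0 l1].
rewrite mulr1 ler_expR /Z /bfun.
have h1 : - `|eta| <= eta * l.
  have : `|eta * l| <= `|eta| by rewrite normrM (ger0_norm l0); have := normr_ge0 eta; nra.
  rewrite ler_norml; case/andP => //.
have hp : - `|p| <= p by rewrite lerNnormlW.
have hq : - `|q| <= q by rewrite lerNnormlW.
have hq' : q <= `|q| by rewrite ler_norm.
have hp' : p <= `|p| by rewrite ler_norm.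
have l2 : l ^+ 2 <= 1 by nra.
have l4 : l ^+ 4 <= 1 by rewrite (_ : 4 = 2 * 2)%N // exprM; nra.
have e1 : p * l ^+ 2 <= `|p| by have := normr_ge0 p; have := sqr_ge0 l; nra.
have e2 : q * l <= `|q| by have := normr_ge0 q; nra.
have HB : l ^+ 4 / 4 + p * l ^+ 2 / 2 + q * l <= 1 + `|p| + `|q|.
  have := normr_ge0 p; lra.
set B := l ^+ 4 / 4 + p * l ^+ 2 / 2 + q * l in HB *.
nra.
Qed.
Lemma case1_ineq (R : realType) (p q x tau eta l : R) :
  0 < x ^+ 2 + p -> 1 <= tau -> `|tau * (eta - (x ^+ 3 + p * x + q))| <= 1 ->
  2 * tau * (eta * l - bfun p q l) <=
  tau * (eta * (x + x) - bfun p q x - bfun p q x) + ((x ^+ 2 + p) / 2)^-1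
   - (x ^+ 2 + p) / 2 * (l - x) ^+ 2.
Proof.
move=> ha t1 hs.
set a := (x ^+ 2 + p) / 2.
have a0 : 0 < a by rewrite /a; lra.
set u := l - x.
set s := eta - (x ^+ 3 + p * x + q).
set D := u ^+ 2 * ((u / 2 + x) ^+ 2 + a).
have HD : bfun p q l - bfun p q x - (x ^+ 3 + p * x + q) * u = D.
  by rewrite /D /a /u /bfun; field.
have Hdiff : 2 * tau * (eta * l - bfun p q l) - tau * (eta * (x + x) - bfun p q x - bfun p q x)
   = 2 * tau * (s * u) - 2 * tau * D.
  by rewrite -HD /s /u; field.
have Hsu : tau * s * u <= `|u|.
  have : `|tau * s * u| <= `|u|.
    rewrite normrM; have := normr_ge0 u; rewrite -/s in hs; nra.
  by move/(le_trans (ler_norm _)).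
have HD0 : a * u ^+ 2 <= D.
  rewrite /D mulrDr; have := mulr_ge0 (sqr_ge0 u) (sqr_ge0 (u / 2 + x)); lra.
have D0 : 0 <= D by apply: le_trans HD0; rewrite mulr_ge0 ?sqr_ge0 ?ltW.
have HDt : D <= tau * D.
  have t1' : 0 <= tau - 1 by rewrite subr_ge0.
  have := mulr_ge0 D0 t1'; nra.
have ia : a * a^-1 = 1 by rewrite mulfV ?gt_eqF.
have ia0 : 0 < a^-1 by rewrite invr_gt0.
have Hu2 : u ^+ 2 = `|u| ^+ 2 by rewrite real_normK ?num_real.
have Hq : 2 * `|u| - a * u ^+ 2 <= a^-1.
  rewrite Hu2; have := sqr_ge0 (a * `|u| - 1); nra.
nra.
Qed.

Lemma case2_ineq (R : realType) (p q x r tau eta l : R) :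
  x ^+ 2 = - p -> r ^+ 2 = - p -> 1 <= tau -> `|tau * (eta - q)| <= 1 ->
  2 * tau * (eta * l - bfun p q l) <=
  tau * (eta * (x + r) - bfun p q x - bfun p q r) + (`|x| + `|r| + 5 / 2 - p)
   - 1 / 2 * (l - 0) ^+ 2.
Proof.
move=> hx hr t1 hs.
have bx : bfun p q x = - (p ^+ 2 / 4) + q * x.
  rewrite /bfun (_ : x ^+ 4 = (x ^+ 2) ^+ 2); last by rewrite -exprM.
  by rewrite hx; field.
have br : bfun p q r = - (p ^+ 2 / 4) + q * r.
  rewrite /bfun (_ : r ^+ 4 = (r ^+ 2) ^+ 2); last by rewrite -exprM.
  by rewrite hr; field.
set s := eta - q.
have Hdiff : 2 * tau * (eta * l - bfun p q l) - tau * (eta * (x + r) - bfun p q x - bfun p q r)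
   = tau * s * (2 * l - x - r) - tau * ((l ^+ 2 + p) ^+ 2 / 2).
  by rewrite bx br /s /bfun; field.
have H1 : tau * s * (2 * l - x - r) <= 2 * `|l| + `|x| + `|r|.
  have : `|tau * s * (2 * l - x - r)| <= `|2 * l - x - r|.
    rewrite normrM; have := normr_ge0 (2 * l - x - r); rewrite -/s in hs; nra.
  move/(le_trans (ler_norm _)) => h; apply: le_trans h _.
  have n1 := ler_normB (2 * l - x) r.
  have n2 := ler_normB (2 * l) x.
  have n3 : `|2 * l| = 2 * `|l| by rewrite normrM ger0_norm.
  lra.
have H2 : (l ^+ 2 + p) ^+ 2 / 2 <= tau * ((l ^+ 2 + p) ^+ 2 / 2).
  have := sqr_ge0 (l ^+ 2 + p); nra.
have Hl2 : l ^+ 2 = `|l| ^+ 2 by rewrite real_normK ?num_real.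
have H3 : 2 * `|l| - (l ^+ 2 + p) ^+ 2 / 2 <= 5 / 2 - p - l ^+ 2 / 2.
  have := sqr_ge0 (l ^+ 2 + p - 1); have := sqr_ge0 (`|l| - 2); rewrite Hl2; nra.
rewrite subr0; nra.
Qed.
Definition gfun {R : realType} (c p q x r d tau eta : R) :=
  expR (tau * (eta * (x + r) - bfun p q x - bfun p q r - d)) * (c * tau / fine (Nfun p q eta tau)).

Lemma Sb_eq (R : realType) (c p q x r tau eta : R) :
  complex.Re (Sbdry_integrand c p q x 0 0 r 0 0 tau eta) = gfun c p q x r 0 tau eta /\
  complex.Im (Sbdry_integrand c p q x 0 0 r 0 0 tau eta) = 0.
Proof.
rewrite /Sbdry_integrand /cexp /gfun /=.
rewrite !subr0 !mulr0 addr0 mulr0 cos0 sin0 !mulr0 mulr1 subr0 mul0r addr0; split=> //.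
by congr (expR _ * _); ring.
Qed.

Lemma S_eq (R : realType) (c p q x r h k tau eta : R) :
  complex.Re (S_integrand c p q (bpt1 x) (bpt2 p q x h) (bpt1 r) (bpt2 p q r k) tau eta)
   = gfun c p q x r (h + k) tau eta /\
  complex.Im (S_integrand c p q (bpt1 x) (bpt2 p q x h) (bpt1 r) (bpt2 p q r k) tau eta) = 0.
Proof.
rewrite /S_integrand /cexp /gfun /bpt1 /bpt2 /=.
rewrite !(subrr, mulr0, mul0r, addr0, add0r, mul1r, subr0, cos0, sin0, mulr1).
rewrite oppr0 !mul0r cos0 sin0 mulr1 mulr0 mul0r; split=> //.
by congr (expR _ * _); ring.
Qed.
Lemma gfun_ge0 (R : realType) (c p q x r d tau eta : R) : 0 <= c -> 0 <= tau ->
  0 <= gfun c p q x r d tau eta.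
Proof.
move=> c0 t0; rewrite /gfun mulr_ge0 ?expR_ge0 // divr_ge0 ?mulr_ge0 //.
exact/fine_ge0/N_ge0.
Qed.

Lemma gfun_lower (R : realType) (c p q x r d tau eta k m a : R) :
  0 < c -> 1 <= tau -> 0 < a ->
  (forall l, 2 * tau * (eta * l - bfun p q l) <=
     tau * (eta * (x + r) - bfun p q x - bfun p q r) + k - a * (l - m) ^+ 2) ->
  c * tau * expR (- (tau * d)) * (normal_peak (Num.sqrt (a^-1 / 2)) / expR k)
    <= gfun c p q x r d tau eta.
Proof.
move=> c0 t1 a0 Hl.
set E := tau * (eta * (x + r) - bfun p q x - bfun p q r).
set pk := normal_peak (Num.sqrt (a^-1 / 2)).
have pk0 : 0 < pk.
  apply: normal_peak_gt0; rewrite sqrtr_eq0 -ltNge divr_gt0 // invr_gt0 //.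
have Nup := @N_upper R p q eta tau E k m a a0 Hl.
have Nlo := @N_gt0 R p q eta tau (le_trans ler01 t1).
rewrite -/pk in Nup.
rewrite /gfun.
case: (Nfun p q eta tau) Nup Nlo => [n| |] //= Nup Nlo.
rewrite lee_fin in Nup; rewrite lte_fin in Nlo.
have t0 : 0 < tau by lra.
have -> : tau * (eta * (x + r) - bfun p q x - bfun p q r - d) = E + - (tau * d)
  by rewrite /E; ring.
rewrite expRD.
have B0 : 0 < expR (E + k) / pk by rewrite divr_gt0 ?expR_gt0.
have -> : c * tau * expR (- (tau * d)) * (pk / expR k) =
    expR E * expR (- (tau * d)) * (c * tau / (expR (E + k) / pk)).
  rewrite expRD; field.
  by rewrite !gt_eqF ?expR_gt0.
rewrite ler_pM2l ?mulr_gt0 ?expR_gt0 //.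
by rewrite ler_pM2l ?mulr_gt0 // lef_pV2 ?posrE.
Qed.
Lemma indic_ge0' (R : realType) (A : set R) (x : R) : 0 <= \1_A x :> R.
Proof. by rewrite indicE; case: (_ \in _). Qed.

Lemma integral_cst_indicD (R : realType) (D : set R) (K a b : R) :
  measurable D -> (`[a, b]%classic : set R) `<=` D -> 0 <= K -> a <= b ->
  (\int[@lebesgue_measure R]_(l in D) (K * \1_(`[a, b]%classic : set R) l)%:E
    = (K * (b - a))%:E)%E.
Proof.
move=> mD sD K0 ab.
under eq_integral do rewrite EFinM.
rewrite ge0_integralZl_EFin //.
- rewrite integral_indic // setIidl //.
  transitivity (K%:E * (@lebesgue_measure R ([set` `[a, b]] : set R)))%E; first by [].
  rewrite lebesgue_measure_itv /=.
  case: ifPn => [_|]; first by rewrite -EFinD -EFinM.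
  rewrite lte_fin -leNgt => ba.
  have -> : b = a by apply/eqP; rewrite eq_le ab ba.
  by rewrite subrr mulr0 mule0.
- apply/measurable_EFinP; apply: measurable_funTS; exact: measurable_indic.
Qed.

Lemma main_bound (R : realType) (c p q x r eta0 k m a : R) : 0 < c -> 0 < a ->
  (forall tau eta l, 1 <= tau -> `|tau * (eta - eta0)| <= 1 ->
     2 * tau * (eta * l - bfun p q l) <=
     tau * (eta * (x + r) - bfun p q x - bfun p q r) + k - a * (l - m) ^+ 2) ->
  exists2 C : R, 0 < C & forall d T, 0 <= d -> 1 <= T ->
   ((C * (T - 1) * expR (- (T * d)))%:E <=
     \int[@lebesgue_measure R]_(tau in `]0%R, +oo[)
       \int[@lebesgue_measure R]_(eta in [set: R]) (gfun c p q x r d tau eta)%:E)%E.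
Proof.
move=> c0 a0 H.
set pk := normal_peak (Num.sqrt (a^-1 / 2)).
have pk0 : 0 < pk.
  apply: normal_peak_gt0; rewrite sqrtr_eq0 -ltNge divr_gt0 // invr_gt0 //.
set C1 := pk / expR k.
have C10 : 0 < C1 by rewrite divr_gt0 ?expR_gt0.
have K0 : 0 < 2 * c * C1 by apply: mulr_gt0 => //; apply: mulr_gt0.
exists (2 * c * C1) => //.
move=> d T d0 T1.
have inner : forall tau, 1 <= tau ->
   ((2 * c * C1 * expR (- (tau * d)))%:E <=
     \int[@lebesgue_measure R]_(eta in [set: R]) (gfun c p q x r d tau eta)%:E)%E.
  move=> tau t1.
  have t0 : 0 < tau by lra.
  have -> : 2 * c * C1 * expR (- (tau * d)) =
     (c * tau * expR (- (tau * d)) * C1) * ((eta0 + tau^-1) - (eta0 - tau^-1)).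
    by field; rewrite gt_eqF.
  rewrite -(@integral_cst_indicD R setT _ _ _ measurableT (@subsetT _ _)); last 2 first.
  - by apply/ltW; apply: mulr_gt0 => //; apply: mulr_gt0; [exact: mulr_gt0|exact: expR_gt0].
  - have : 0 < tau^-1 by rewrite invr_gt0.
    lra.
  have Kt : 0 < c * tau * expR (- (tau * d)) * C1.
    by apply: mulr_gt0 => //; apply: mulr_gt0; [exact: mulr_gt0|exact: expR_gt0].
  apply: le_integral_nm => eta _.
    by rewrite lee_fin; apply: mulr_ge0; [exact: ltW|exact: indic_ge0'].
  rewrite lee_fin indicE; case: (boolP (eta \in _)) => [|_]; last first.
    by rewrite mulr0 gfun_ge0 ?ltW.
  rewrite inE /= in_itv /= => /andP[e1 e2].
  rewrite mulr1; apply: gfun_lower => //.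
  move=> l; apply: H => //.
  have ti : tau * tau^-1 = 1 by rewrite mulfV ?gt_eqF.
  have h1 := ler_wpM2l (ltW t0) e1.
  have h2 := ler_wpM2l (ltW t0) e2.
  rewrite mulrBr ti in h1; rewrite mulrDr ti in h2.
  rewrite ler_norml mulrBr; apply/andP; split; lra.
apply: (@le_trans _ _ (\int[@lebesgue_measure R]_(tau in `]0%R, +oo[)
    ((2 * c * C1 * expR (- (T * d))) * \1_(`[1, T]%classic : set R) tau)%:E)%E).
  rewrite integral_cst_indicD //.
  - by rewrite -mulrA [(T - 1) * _]mulrC mulrA.
  - by move=> t /=; rewrite !in_itv /= andbT => /andP[t1 _]; lra.
  - by apply/ltW; apply: mulr_gt0 => //; exact: expR_gt0.
apply: le_integral_nm => tau /=; rewrite in_itv /= andbT => t0.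
  rewrite lee_fin; apply: mulr_ge0; last exact: indic_ge0'.
  by apply/ltW; apply: mulr_gt0 => //; exact: expR_gt0.
rewrite indicE; case: (boolP (tau \in _)) => [|_]; last first.
  rewrite mulr0; apply: integral_ge0 => eta _; rewrite lee_fin gfun_ge0 //; exact: ltW.
rewrite inE /= in_itv /= => /andP[t1 tT].
rewrite mulr1; apply: le_trans (inner _ t1).
rewrite lee_fin ler_pM2l // ler_expR lerN2.
exact: ler_wpM2r.
Qed.
Theorem theorem2p2 (R : realType) (p q c x r : R) :
  p < 0 -> 0 < c ->
  ((x = r /\ Num.sqrt (- p) < `|x|) \/
   (`|x| = Num.sqrt (- p) /\ `|r| = Num.sqrt (- p))) ->
  (* first claim: calS[(x,0,0),(r,0,0)] = +oo, integrand real and >= 0 *)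
  ((forall tau eta : R, 0 < tau ->
      complex.Im (Sbdry_integrand c p q x 0 0 r 0 0 tau eta) = 0 /\
      0 <= complex.Re (Sbdry_integrand c p q x 0 0 r 0 0 tau eta)) /\
   kernel_value (Sbdry_integrand c p q x 0 0 r 0 0) = +oo%E) /\
  (* second claim: S[(x, i(b x + h)), (r, i(b r + k))] -> oo as h + k -> 0+ *)
  ((forall h k tau eta : R, 0 < h + k -> 0 < tau ->
      complex.Im (S_integrand c p q (bpt1 x) (bpt2 p q x h) (bpt1 r) (bpt2 p q r k) tau eta) = 0 /\
      0 <= complex.Re (S_integrand c p q (bpt1 x) (bpt2 p q x h) (bpt1 r) (bpt2 p q r k) tau eta)) /\
   (forall M : R, exists2 e : R, 0 < e &
      forall h k : R, 0 < h + k < e ->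
        (M%:E <= kernel_value
           (S_integrand c p q (bpt1 x) (bpt2 p q x h) (bpt1 r) (bpt2 p q r k)))%E)).
Proof.
move=> p0 c0 Hc.
have mp : 0 <= - p by rewrite oppr_ge0 ltW.
have sp0 := sqrtr_ge0 (- p).
have sp2 : Num.sqrt (- p) ^+ 2 = - p by rewrite sqr_sqrtr.
have [C C0 HC] : exists2 C : R, 0 < C & forall d T, 0 <= d -> 1 <= T ->
   ((C * (T - 1) * expR (- (T * d)))%:E <=
     \int[@lebesgue_measure R]_(tau in `]0%R, +oo[)
       \int[@lebesgue_measure R]_(eta in [set: R]) (gfun c p q x r d tau eta)%:E)%E.
  case: Hc => [[xr hx] | [hx hr]].
  - rewrite -xr.
    have ha : 0 < x ^+ 2 + p.
      have : x ^+ 2 = `|x| ^+ 2 by rewrite real_normK ?num_real.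
      nra.
    have a0 : 0 < (x ^+ 2 + p) / 2 by lra.
    apply: (@main_bound R c p q x x (x ^+ 3 + p * x + q) (((x ^+ 2 + p) / 2)^-1) x
      ((x ^+ 2 + p) / 2) c0 a0).
    move=> tau eta l t1 hs; exact: case1_ineq.
  - have hx2 : x ^+ 2 = - p by rewrite -real_normK ?num_real // hx.
    have hr2 : r ^+ 2 = - p by rewrite -real_normK ?num_real // hr.
    have a0 : 0 < 1 / 2 :> R by lra.
    apply: (@main_bound R c p q x r q (`|x| + `|r| + 5 / 2 - p) 0 (1 / 2) c0 a0).
    move=> tau eta l t1 hs; exact: case2_ineq.
split; split.
- move=> tau eta t0; have [-> ->] := @Sb_eq R c p q x r tau eta.
  split => //; apply: gfun_ge0; exact: ltW.
- rewrite /kernel_value.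
  transitivity (\int[@lebesgue_measure R]_(tau in `]0%R, +oo[)
       \int[@lebesgue_measure R]_(eta in [set: R]) (gfun c p q x r 0 tau eta)%:E)%E.
    apply: eq_integral => tau _; apply: eq_integral => eta _.
    by rewrite (@Sb_eq R c p q x r tau eta).1.
  apply/eqyP => A A0.
  have T1 : 1 <= 1 + A / C by rewrite lerDl divr_ge0 ?ltW.
  apply: le_trans (HC 0 (1 + A / C) (lexx 0) T1).
  rewrite mulr0 oppr0 expR0 mulr1 lee_fin addrAC subrr add0r mulrC divfK //.
  by rewrite gt_eqF.
- move=> h k tau eta hk t0; have [-> ->] := @S_eq R c p q x r h k tau eta.
  split => //; apply: gfun_ge0; exact: ltW.
- move=> M.
  set T := 1 + `|M| * expR 1 / C.
  have T1 : 1 <= T by rewrite /T lerDl !mulr_ge0 ?expR_ge0 // invr_ge0 ltW.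
  have T0 : 0 < T by lra.
  exists T^-1; first by rewrite invr_gt0.
  move=> h k /andP[hk0 hke].
  rewrite /kernel_value.
  have -> : (\int[@lebesgue_measure R]_(tau in `]0%R, +oo[)
     \int[@lebesgue_measure R]_(eta in [set: R])
     (complex.Re (S_integrand c p q (bpt1 x) (bpt2 p q x h) (bpt1 r) (bpt2 p q r k) tau eta))%:E)%E
    = (\int[@lebesgue_measure R]_(tau in `]0%R, +oo[)
       \int[@lebesgue_measure R]_(eta in [set: R]) (gfun c p q x r (h + k) tau eta)%:E)%E.
    apply: eq_integral => tau _; apply: eq_integral => eta _.
    by rewrite (@S_eq R c p q x r h k tau eta).1.
  apply: le_trans (HC (h + k) T (ltW hk0) T1).
  rewrite lee_fin.
  have -> : C * (T - 1) = `|M| * expR 1 by rewrite /T addrAC subrr add0r mulrC divfK // gt_eqF.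
  have Td : T * (h + k) < 1.
    have TT : T * T^-1 = 1 by rewrite mulfV // gt_eqF.
    by rewrite -TT ltr_pM2l.
  have e1 : expR (-1) <= expR (- (T * (h + k))) by rewrite ler_expR lerN2 ltW.
  apply: (le_trans (ler_norm M)).
  have H : `|M| * expR 1 * expR (-1) <= `|M| * expR 1 * expR (- (T * (h + k))).
    apply: ler_wpM2l e1; apply: mulr_ge0 => //; exact: expR_ge0.
  by rewrite -mulrA -expRD subrr expR0 mulr1 in H.
Qed.
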